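(* Let $\Lambda_1,\Lambda_2,\Gamma$ be $k$-graphs and for $i=1,2$ let $\phi_i:\Gamma\to\Lambda_i$ be an injective $k$-graph morphism such that either $\phi_i(\Gamma)$ is hereditary in $\Lambda_i$ for both $i=1,2$, or $\phi_i(\Gamma)$ is co-hereditary in $\Lambda_i$ for both $i=1,2$. Let $\sim_\phi$ be the smallest equivalence relation on the disjoint union $\Lambda_1\sqcup\Lambda_2$ such that $\phi_1(\gamma)\sim_\phi\phi_2(\gamma)$ for all $\gamma\in\Gamma$. Then $\sim_\phi$ satisfies the following four properties (and hence $(\Lambda_1\sqcup\Lambda_2)/{\sim_\phi}$ is a $k$-graph with the induced structure maps): (1) if $\mu \sim_\phi \nu$ then $d(\mu) = d(\nu)$; (2) if $\alpha \sim_\phi \alpha'$, $\beta \sim_\phi \beta'$, $r(\beta) = s(\alpha)$ and $r(\beta') = s(\alpha')$, then $\alpha\beta \sim_\phi \alpha'\beta'$; (3) if $\alpha\beta \sim_\phi \alpha'\beta'$ and $d(\alpha) = d(\alpha')$, then $\alpha \sim_\phi \alpha'$ and $\beta \sim_\phi \beta'$; (4) if $s(\alpha) \sim_\phi r(\beta)$, then there exist $\alpha'\sim_\phi\alpha$ and $\beta'\sim_\phi\beta$ with $s(\alpha') = r(\beta')$.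
   Context: A $k$-graph is a countable small category $\Lambda$ with a functor $d:\Lambda\to\mathbb{N}^k$ such that, writing $\Lambda^n=d^{-1}(n)$, for all $m,n\in\mathbb{N}^k$ composition is a bijection from $\{(\mu,\nu)\in\Lambda^m\times\Lambda^n: s(\mu)=r(\nu)\}$ onto $\Lambda^{m+n}$; vertices $\Lambda^0$ are identified with identity morphisms, and $r,s$ are range and source maps. A $k$-graph morphism is a degree-preserving functor. The disjoint union of two $k$-graphs is a $k$-graph in the obvious way. For $v\in\Lambda^0$ and $X\subseteq\Lambda$ write $vX=\{\lambda\in X: r(\lambda)=v\}$, $Xv=\{\lambda\in X:s(\lambda)=v\}$, and for $V\subseteq\Lambda^0$, $V\Lambda=r^{-1}(V)$, $\Lambda V=s^{-1}(V)$. A subgraph $\Gamma'\subseteq\Lambda$ is hereditary if $\Gamma'=\Gamma'^0\Lambda$ and co-hereditary if $\Gamma'=\Lambda\Gamma'^0$. *)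

(* Defs.v *)
From mathcomp Require Import all_boot.
From Stdlib Require Import Relations.
Set Implicit Arguments.
Unset Strict Implicit.
Unset Printing Implicit Defensive.

Definition NN (k : nat) := {ffun 'I_k -> nat}.
Definition NNadd k (m n : NN k) : NN k := [ffun i => m i + n i].
Definition NN0 k : NN k := [ffun => 0%N].

(* A k-graph: a countable small category whose morphisms form the type
   [kmor]; objects (vertices) are identified with identity morphisms, i.e.
   the elements v with kr v = v (equivalently of the form kr x / ks x).
   Composition [kcomp a b] (= "a b", a after b) is only meaningful when
   ks a = kr b; its value elsewhere is irrelevant. *)
Record kgraph (k : nat) : Type := KGraph {
  kmor :> Type;
  kr : kmor -> kmor;
  ks : kmor -> kmor;
  kcomp : kmor -> kmor -> kmor;
  kdeg : kmor -> NN k;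
  kcountable : exists f : kmor -> nat, injective f;
  kr_r : forall x, kr (kr x) = kr x;
  ks_r : forall x, ks (kr x) = kr x;
  kr_s : forall x, kr (ks x) = ks x;
  ks_s : forall x, ks (ks x) = ks x;
  kr_comp : forall a b, ks a = kr b -> kr (kcomp a b) = kr a;
  ks_comp : forall a b, ks a = kr b -> ks (kcomp a b) = ks b;
  kcomp_idl : forall a, kcomp (kr a) a = a;
  kcomp_idr : forall a, kcomp a (ks a) = a;
  kcomp_assoc : forall a b c, ks a = kr b -> ks b = kr c ->
      kcomp (kcomp a b) c = kcomp a (kcomp b c);
  kdeg_id : forall x, kdeg (kr x) = NN0 k;
  kdeg_comp : forall a b, ks a = kr b ->
      kdeg (kcomp a b) = NNadd (kdeg a) (kdeg b);
  kfact_ex : forall l (m n : NN k), kdeg l = NNadd m n ->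
      exists a b, [/\ ks a = kr b, kdeg a = m, kdeg b = n & kcomp a b = l];
  kfact_uniq : forall a b a' b', ks a = kr b -> ks a' = kr b' ->
      kdeg a = kdeg a' -> kdeg b = kdeg b' -> kcomp a b = kcomp a' b' ->
      a = a' /\ b = b'
}.

Definition kmorphism k (G L : kgraph k) (f : G -> L) : Prop :=
  [/\ (forall x, f (kr x) = kr (f x)),
      (forall x, f (ks x) = ks (f x)),
      (forall a b, ks a = kr b -> f (kcomp a b) = kcomp (f a) (f b))
    & (forall x, kdeg (f x) = kdeg x)].

Definition image_of (A B : Type) (f : A -> B) : B -> Prop :=
  fun y => exists x, f x = y.

(* X hereditary in L :  X = X^0 L = r^{-1}(X^0) *)
Definition hereditary k (L : kgraph k) (X : L -> Prop) : Prop :=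
  forall l, X l <-> X (kr l).
(* X co-hereditary in L :  X = L X^0 = s^{-1}(X^0) *)
Definition cohereditary k (L : kgraph k) (X : L -> Prop) : Prop :=
  forall l, X l <-> X (ks l).

Section Union.
Variables (k : nat) (L1 L2 : kgraph k).
Definition ur (x : L1 + L2) : L1 + L2 :=
  match x with inl a => inl (kr a) | inr b => inr (kr b) end.
Definition us (x : L1 + L2) : L1 + L2 :=
  match x with inl a => inl (ks a) | inr b => inr (ks b) end.
Definition udeg (x : L1 + L2) : NN k :=
  match x with inl a => kdeg a | inr b => kdeg b end.
(* composition; only meaningful for composable pairs (us x = ur y), which
   necessarily lie in the same component *)
Definition ucomp (x y : L1 + L2) : L1 + L2 :=
  match x, y with
  | inl a, inl b => inl (kcomp a b)
  | inr a, inr b => inr (kcomp a b)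
  | _, _ => x
  end.
End Union.

Definition glue_base k (G L1 L2 : kgraph k) (phi1 : G -> L1) (phi2 : G -> L2)
  : relation (L1 + L2) :=
  fun x y => exists g, x = inl (phi1 g) /\ y = inr (phi2 g).
Definition glue_equiv k (G L1 L2 : kgraph k) (phi1 : G -> L1) (phi2 : G -> L2)
  : relation (L1 + L2) :=
  clos_refl_sym_trans (L1 + L2) (glue_base phi1 phi2).

(* Main.v *)
Require Import Defs.
From mathcomp Require Import all_boot.
From Stdlib Require Import Relations.
Set Implicit Arguments.
Unset Strict Implicit.

Lemma img_kr k (G L : kgraph k) (f : G -> L) (hm : kmorphism f) x :
  image_of f x -> image_of f (kr x).
Proof. case: hm => hr _ _ _ [g <-]; exists (kr g); apply: hr. Qed.

Lemma img_ks k (G L : kgraph k) (f : G -> L) (hm : kmorphism f) x :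
  image_of f x -> image_of f (ks x).
Proof. case: hm => _ hs _ _ [g <-]; exists (ks g); apply: hs. Qed.

Lemma NNcancel k (m n n' : NN k) : NNadd m n = NNadd m n' -> n = n'.
Proof.
move=> E; apply/ffunP => i; have := congr1 (fun f : NN k => f i) E.
rewrite /NNadd !ffunE; exact: addnI.
Qed.

Lemma factor k (G L : kgraph k) (f : G -> L) (hm : kmorphism f)
  (hi : injective f)
  (hX : hereditary (image_of f) \/ cohereditary (image_of f)) a b g :
  ks a = kr b -> kcomp a b = f g ->
  exists x y, [/\ a = f x, b = f y, ks x = kr y & g = kcomp x y].
Proof.
move=> hab hg.
have Xab : image_of f (kcomp a b) by exists g.
have [Xa Xb] : image_of f a /\ image_of f b.
  case: hX => hX.
  - have Xa : image_of f a.
      apply/(proj2 (hX a)); rewrite -(kr_comp hab); exact: img_kr Xab.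
    split => //; apply/(proj2 (hX b)); rewrite -hab; exact: img_ks Xa.
  - have Xb : image_of f b.
      apply/(proj2 (hX b)); rewrite -(ks_comp hab); exact: img_ks Xab.
    split => //; apply/(proj2 (hX a)); rewrite hab; exact: img_kr Xb.
case: Xa => x ex; case: Xb => y ey.
case: hm => hr hs hc hd.
have exy : ks x = kr y by apply: hi; rewrite hs hr ex ey.
exists x, y; split => //; apply: hi; rewrite hc // ex ey; by [].
Qed.

Lemma cross k (G L1 L2 : kgraph k) (phi1 : G -> L1) (phi2 : G -> L2)
  (hm1 : kmorphism phi1) (hm2 : kmorphism phi2)
  (hi1 : injective phi1) (hi2 : injective phi2)
  (hX1 : hereditary (image_of phi1) \/ cohereditary (image_of phi1))
  (hX2 : hereditary (image_of phi2) \/ cohereditary (image_of phi2))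
  a b a' b' g :
  ks a = kr b -> ks a' = kr b' -> kcomp a b = phi1 g -> kcomp a' b' = phi2 g ->
  kdeg a = kdeg a' ->
  exists x y, [/\ a = phi1 x, b = phi1 y, a' = phi2 x & b' = phi2 y].
Proof.
move=> hab hab' e1 e2 hd.
have [x [y [ex ey exy eg]]] := factor hm1 hi1 hX1 hab e1.
have [x' [y' [ex' ey' exy' eg']]] := factor hm2 hi2 hX2 hab' e2.
case: hm1 => _ _ _ d1; case: hm2 => _ _ _ d2.
have dx : kdeg x = kdeg x' by rewrite -d1 -d2 -ex -ex'.
have dy : kdeg y = kdeg y'.
  apply: (@NNcancel _ (kdeg x)).
  by rewrite -kdeg_comp // -eg eg' kdeg_comp // dx.
case: (kfact_uniq exy exy' dx dy (etrans (esym eg) eg')) => e3 e4.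
subst; by exists x', y'.
Qed.

Lemma four k (G L1 L2 : kgraph k) (phi1 : G -> L1) (phi2 : G -> L2)
  (hm1 : kmorphism phi1) (hm2 : kmorphism phi2)
  (hi1 : injective phi1) (hi2 : injective phi2)
  (h : hereditary (image_of phi2) \/ cohereditary (image_of phi1))
  (a : L1) (b : L2) g :
  ks a = phi1 g -> kr b = phi2 g ->
  (exists x, a = phi1 x /\ ks x = g) \/ (exists y, b = phi2 y /\ kr y = g).
Proof.
move=> ea eb; case: h => h.
- have [y ey] : image_of phi2 b by apply/(proj2 (h b)); rewrite eb; exists g.
  right; exists y; split => //; apply: hi2; case: hm2 => hr _ _ _.
  by rewrite hr ey.
- have [x ex] : image_of phi1 a by apply/(proj2 (h a)); rewrite ea; exists g.
  left; exists x; split => //; apply: hi1; case: hm1 => _ hs _ _.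
  by rewrite hs ex.
Qed.

Definition Rc k (G L1 L2 : kgraph k) (phi1 : G -> L1) (phi2 : G -> L2)
  (x y : L1 + L2) :=
  x = y \/ (exists g, x = inl (phi1 g) /\ y = inr (phi2 g)) \/
  (exists g, x = inr (phi2 g) /\ y = inl (phi1 g)).

Lemma Rchar k (G L1 L2 : kgraph k) (phi1 : G -> L1) (phi2 : G -> L2)
  (hi1 : injective phi1) (hi2 : injective phi2) x y :
  glue_equiv phi1 phi2 x y <-> Rc phi1 phi2 x y.
Proof.
split.
- elim => {x y}.
  + move=> x y [g [-> ->]]; right; left; by exists g.
  + by move=> x; left.
  + move=> x y _ [->|[[g [-> ->]]|[g [-> ->]]]]; first by left.
    * right; right; by exists g.
    * right; left; by exists g.
  + move=> x y z _ H1 _.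
    case: H1 => [->|[[g [-> ->]]|[g [-> ->]]]] //.
    * case => [<-|[[g' [E ->]]|[g' [E ->]]]]; try discriminate.
      - right; left; by exists g.
      - case: E => /hi2 <-; by left.
    * case => [<-|[[g' [E ->]]|[g' [E ->]]]]; try discriminate.
      - right; right; by exists g.
      - case: E => /hi1 <-; by left.
- case => [->|[[g [-> ->]]|[g [-> ->]]]].
  + exact: rst_refl.
  + apply: rst_step; by exists g.
  + apply: rst_sym; apply: rst_step; by exists g.
Qed.

Lemma comp_ok k (G L : kgraph k) (f : G -> L) (hm : kmorphism f)
  (hi : injective f) g h :
  ks (f g) = kr (f h) -> ks g = kr h /\ kcomp (f g) (f h) = f (kcomp g h).
Proof.
case: hm => hr hs hc _ E.
have E' : ks g = kr h by apply: hi; rewrite hs hr.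
by split => //; rewrite hc.
Qed.

Unset Implicit Arguments.
Theorem mainTheorem2 (k : nat) (L1 L2 G : kgraph k)
  (phi1 : G -> L1) (phi2 : G -> L2)
  (hm1 : kmorphism phi1) (hm2 : kmorphism phi2)
  (hi1 : injective phi1) (hi2 : injective phi2)
  (hher : (hereditary (image_of phi1) /\ hereditary (image_of phi2)) \/
          (cohereditary (image_of phi1) /\ cohereditary (image_of phi2))) :
  let R := glue_equiv phi1 phi2 in
  (* (1) *)
  (forall mu nu, R mu nu -> udeg mu = udeg nu) /\
  (* (2) *)
  (forall a a' b b', R a a' -> R b b' ->
     ur b = us a -> ur b' = us a' -> R (ucomp a b) (ucomp a' b')) /\
  (* (3) *)
  (forall a b a' b', us a = ur b -> us a' = ur b' ->
     R (ucomp a b) (ucomp a' b') -> udeg a = udeg a' ->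
     R a a' /\ R b b') /\
  (* (4) *)
  (forall a b, R (us a) (ur b) ->
     exists a' b', [/\ R a' a, R b' b & us a' = ur b']).
Proof.
move=> R.
have hX1 : hereditary (image_of phi1) \/ cohereditary (image_of phi1).
  by case: hher => [[? ?]|[? ?]]; [left|right].
have hX2 : hereditary (image_of phi2) \/ cohereditary (image_of phi2).
  by case: hher => [[? ?]|[? ?]]; [left|right].
have h4a : hereditary (image_of phi2) \/ cohereditary (image_of phi1).
  by case: hher => [[? ?]|[? ?]]; [left|right].
have h4b : hereditary (image_of phi1) \/ cohereditary (image_of phi2).
  by case: hher => [[? ?]|[? ?]]; [left|right].
have RC := Rchar hi1 hi2.
have hm1' := hm1; have hm2' := hm2.
case: hm1' => hr1 hs1 hc1 hd1; case: hm2' => hr2 hs2 hc2 hd2.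
split; [|split; [|split]].
- move=> mu nu /RC [->|[[g [-> ->]]|[g [-> ->]]]] //=; by rewrite hd1 hd2.
- move=> a a' b b' /RC Ha /RC Hb hb hb'; apply/RC.
  case: Ha => [E|[[g [E1 E2]]|[g [E1 E2]]]];
  case: Hb => [E'|[[h [E3 E4]]|[h [E3 E4]]]]; subst; try by left.
  all: try (by rewrite -hb in hb').
  all: try (by move: hb hb'; case: a' => //=).
  all: try (by move: hb; case: b' => //=).
  all: try (by rewrite hb in hb').
  + case: hb => hb; case: hb' => hb'.
    have [e1 c1] := comp_ok hm1 hi1 (esym hb).
    have [e2 c2] := comp_ok hm2 hi2 (esym hb').
    right; left; exists (kcomp g h); by rewrite /= c1 c2.
  + case: hb => hb; case: hb' => hb'.
    have [e1 c1] := comp_ok hm2 hi2 (esym hb).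
    have [e2 c2] := comp_ok hm1 hi1 (esym hb').
    right; right; exists (kcomp g h); by rewrite /= c1 c2.
- move=> a b a' b'.
  case: a => a; case: b => b; case: a' => a'; case: b' => b' //= hab hab' /RC H hd;
    try discriminate; case: hab => hab; case: hab' => hab'.
  + case: H => [[E]|[[g [E1 E2]]|[g [E1 E2]]]]; try discriminate.
    have hdb : kdeg b = kdeg b'.
      apply: (@NNcancel _ (kdeg a)); by rewrite -kdeg_comp // E kdeg_comp // hd.
    case: (kfact_uniq hab hab' hd hdb E) => -> ->.
    split; apply/RC; by left.
  + case: H => [E|[[g [E1 E2]]|[g [E1 E2]]]]; try discriminate.
    case: E1 => E1; case: E2 => E2.
    have [x [y [-> -> -> ->]]] := cross hm1 hm2 hi1 hi2 hX1 hX2 hab hab' E1 E2 hd.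
    split; apply/RC; right; left; by eexists.
  + case: H => [E|[[g [E1 E2]]|[g [E1 E2]]]]; try discriminate.
    case: E1 => E1; case: E2 => E2.
    have [x [y [-> -> -> ->]]] := cross hm2 hm1 hi2 hi1 hX2 hX1 hab hab' E1 E2 hd.
    split; apply/RC; right; right; by eexists.
  + case: H => [[E]|[[g [E1 E2]]|[g [E1 E2]]]]; try discriminate.
    have hdb : kdeg b = kdeg b'.
      apply: (@NNcancel _ (kdeg a)); by rewrite -kdeg_comp // E kdeg_comp // hd.
    case: (kfact_uniq hab hab' hd hdb E) => -> ->.
    split; apply/RC; by left.
- move=> a b /RC H.
  case: H => [E|[[g [E1 E2]]|[g [E1 E2]]]].
  + exists a, b; split => //; apply/RC; by left.
  + move: a b E1 E2 => [a|a] [b|b] /= E1 E2; try discriminate.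
    case: E1 => E1; case: E2 => E2.
    case: (four hm1 hm2 hi1 hi2 h4a E1 E2) => [[x [ex ekx]]|[y [ey eky]]].
    * exists (inr (phi2 x)), (inr b); split.
      - apply/RC; right; right; exists x; by rewrite ex.
      - apply/RC; by left.
      - by rewrite /= -hs2 ekx E2.
    * exists (inl a), (inl (phi1 y)); split.
      - apply/RC; by left.
      - apply/RC; right; left; exists y; by rewrite ey.
      - by rewrite /= E1 -hr1 eky.
  + move: a b E1 E2 => [a|a] [b|b] /= E1 E2; try discriminate.
    case: E1 => E1; case: E2 => E2.
    case: (four hm2 hm1 hi2 hi1 h4b E1 E2) => [[x [ex ekx]]|[y [ey eky]]].
    * exists (inl (phi1 x)), (inl b); split.
      - apply/RC; right; left; exists x; by rewrite ex.
      - apply/RC; by left.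
      - by rewrite /= -hs1 ekx E2.
    * exists (inr a), (inr (phi2 y)); split.
      - apply/RC; by left.
      - apply/RC; right; right; exists y; by rewrite ey.
      - by rewrite /= E1 -hr2 eky.
Qed.
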